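(* Let $k$ be a field of characteristic $\neq2$, $f\in k[X]$ separable of degree $6$ with set of roots $\Omega\subset\bar k$, $l=k(\Omega)$, $A=k[X]/(f)$, $\delta\in A^*$, and $\delta_\omega=\varphi_\omega(\delta)$ for $\omega\in\Omega$, where $\varphi_\omega$ is evaluation at $X=\omega$. Fix square roots $\sqrt{\delta_\omega}\in\bar k$ and let $m=l(\{\sqrt{\delta_\omega}\sqrt{\delta_\psi}:\omega,\psi\in\Omega\})$. Then $k([\Lambda])=m$.
   Context: $\Lambda$ is the set of $32$ lines $L_\varepsilon\subset\mathbb{P}(A\otimes\bar k)$, for $\varepsilon\in A\otimes\bar k$ with $\varepsilon^2=\delta$, where $L_\varepsilon$ corresponds to the subspace $\{\varepsilon^{-1}(sX+t):s,t\in\bar k\}$. These lines lie on $V_{f,\delta}=\{[q]:\delta q^2\in\mathrm{span}(1,X,X^2)\}$. $G(\bar k/k)$ acts on them. For an object or set $Y$ acted on by $G(\bar k/k)$, the field of definition $k(Y)$ is the smallest subfield $k'\subseteq\bar k$ containing $k$ such that every $\sigma\in G(\bar k/k')$ fixes $Y$. $k([\Lambda])$ denotes the field of definition of the sequence of all lines in $\Lambda$, i.e., the smallest such field over which every line of $\Lambda$ is individually fixed. *)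

(* Defs.v *)
From HB Require Import structures.
From mathcomp Require Import all_boot all_order all_algebra all_field.
Set Implicit Arguments. Unset Strict Implicit. Unset Printing Implicit Defensive.
Import GRing.Theory.
Local Open Scope ring_scope.

Section Defs.
Variables (k : fieldType) (L : closedFieldType) (iota : {rmorphism k -> L}).

Definition is_subfield (K : L -> Prop) : Prop :=
  [/\ K 1, (forall x y, K x -> K y -> K (x - y)),
      (forall x y, K x -> K y -> K (x * y)) & (forall x, K x -> K x^-1)].

Definition over_k (K : L -> Prop) : Prop := is_subfield K /\ forall a, K (iota a).

Definition gen_field (S : L -> Prop) : L -> Prop :=
  fun x => forall K, over_k K -> (forall y, S y -> K y) -> K x.

(* The line L_eps in P(A (x) L), A (x) L = L[X]/(fL), represented by the
   2-dimensional subspace { eps^-1 (s X + t) } of reduced representatives: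
   q lies in it iff eps * q = s X + t in L[X]/(fL). *)
Definition line_of (fL eps : {poly L}) : {poly L} -> Prop :=
  fun q => (size q < size fL)%N /\
           exists s t : L, fL %| eps * q - (s *: 'X + t%:P).

Definition fixes_line (s : {rmorphism L -> L}) (V : {poly L} -> Prop) : Prop :=
  forall q, V q <-> V (map_poly s q).

Definition lines_fixed_over (f delta : {poly k}) (K : L -> Prop) : Prop :=
  forall s : {rmorphism L -> L}, bijective s -> (forall x, K x -> s x = x) ->
  forall eps : {poly L},
    map_poly iota f %| eps * eps - map_poly iota delta ->
    fixes_line s (line_of (map_poly iota f) eps).

End Defs.

(* Main.v *)
Require Import Defs.
From HB Require Import structures.
From mathcomp Require Import all_boot all_order all_algebra all_field.
From mathcomp Require Import boolp classical_sets.
From mathcomp Require Import ring zify.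
Set Implicit Arguments. Unset Strict Implicit. Unset Printing Implicit Defensive.
Import GRing.Theory.
Local Open Scope ring_scope.

Section Sub.
Variable L : fieldType.
Record subF := SubF { sfD : L -> Prop ;
  sf1 : sfD 1 ; sfB : forall x y, sfD x -> sfD y -> sfD (x - y);
  sfM : forall x y, sfD x -> sfD y -> sfD (x * y);
  sfV : forall x, sfD x -> sfD x^-1 }.

Definition sfpred (S : subF) : {pred L} := fun x => `[< sfD S x >].

Lemma sfpred_divring (S : subF) : GRing.divring_closed (sfpred S).
Proof.
split.
- by apply/asboolP; apply: sf1.
- by move=> x y /asboolP Hx /asboolP Hy; apply/asboolP; apply: sfB.
- move=> x y /asboolP Hx /asboolP Hy; apply/asboolP; apply: sfM => //; exact: sfV.
Qed.

HB.instance Definition _ (S : subF) := GRing.isDivringClosed.Build L (sfpred S) (sfpred_divring S).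

Inductive carrier (S : subF) := mkC x of x \in sfpred S.
Definition cval S (u : carrier S) := let: mkC x _ := u in x.
HB.instance Definition _ S := [isSub for (@cval S)].
End Sub.

Section Sub2.
Variable L : fieldType.
HB.instance Definition _ (S : subF L) := [Choice of carrier S by <:].
HB.instance Definition _ (S : subF L) := [SubChoice_isSubUnitRing of carrier S by <:].
HB.instance Definition _ (S : subF L) := [SubNzRing_isSubComNzRing of carrier S by <:].
HB.instance Definition _ (S : subF L) := [SubComUnitRing_isSubIntegralDomain of carrier S by <:].
HB.instance Definition _ (S : subF L) := [SubIntegralDomain_isSubField of carrier S by <:].

Lemma carrierP (S : subF L) (x : carrier S) : sfD S (val x).
Proof. by case: x => x /= /asboolP. Qed.

Definition inC (S : subF L) x (Hx : sfD S x) : carrier S := mkC (asboolT Hx).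
Lemma inCK (S : subF L) x (Hx : sfD S x) : val (inC Hx) = x.
Proof. by []. Qed.
End Sub2.

(* graphs of partial field morphisms *)
Section Graph.
Variable L : fieldType.
Record ggraph := GG { gr : L * L -> Prop;
  gfun : forall a b b', gr (a,b) -> gr (a,b') -> b = b';
  gsub : forall a b a' b', gr (a,b) -> gr (a',b') -> gr (a - a', b - b');
  gmul : forall a b a' b', gr (a,b) -> gr (a',b') -> gr (a * a', b * b');
  gone : gr (1,1);
  ginv : forall a b, gr (a,b) -> exists c, gr (a^-1, c) }.

Definition gdom (G : ggraph) a := exists b, gr G (a, b).

Definition domS (G : ggraph) : subF L.
Proof.
refine (@SubF L (gdom G) _ _ _ _).
- by exists 1; apply: gone.
- by move=> x y [b Hb] [c Hc]; exists (b - c); apply: gsub.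
- by move=> x y [b Hb] [c Hc]; exists (b * c); apply: gmul.
- by move=> x [b Hb]; apply: ginv Hb.
Defined.

Definition phiG (G : ggraph) (x : carrier (domS G)) : L :=
  projT1 (cid (carrierP x)).

Lemma phiGP G (x : carrier (domS G)) : gr G (val x, phiG x).
Proof. exact: (projT2 (cid (carrierP x))). Qed.

Lemma phiG_eq G (x : carrier (domS G)) b : gr G (val x, b) -> phiG x = b.
Proof. by move=> H; apply: (gfun (phiGP x) H). Qed.

Lemma phiG_zmod G : zmod_morphism (@phiG G).
Proof. by move=> x y; apply: phiG_eq; rewrite rmorphB /=; apply: gsub; apply: phiGP. Qed.

Lemma phiG_monoid G : monoid_morphism (@phiG G).
Proof.
split; first by apply: phiG_eq; rewrite rmorph1; apply: gone.
by move=> x y; apply: phiG_eq; rewrite rmorphM /=; apply: gmul; apply: phiGP.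
Qed.

HB.instance Definition _ G := GRing.isZmodMorphism.Build _ _ (@phiG G) (@phiG_zmod G).
HB.instance Definition _ G := GRing.isMonoidMorphism.Build _ _ (@phiG G) (@phiG_monoid G).
End Graph.

Section Core.
Variable L : fieldType.
Variables (G : ggraph L) (z w : L).
Local Notation D := (carrier (domS G)).
Let ev (g : {poly D}) := (map_poly val g).[z].
Let ps (g : {poly D}) := (map_poly (@phiG _ G) g).[w].
Hypothesis Hzw : forall g : {poly D}, ev g = 0 <-> ps g = 0.

Let evM g h : ev (g * h) = ev g * ev h. Proof. by rewrite /ev rmorphM hornerM. Qed.
Let psM g h : ps (g * h) = ps g * ps h. Proof. by rewrite /ps rmorphM hornerM. Qed.
Let evB g h : ev (g - h) = ev g - ev h. Proof. by rewrite /ev rmorphB hornerD hornerN. Qed.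
Let psB g h : ps (g - h) = ps g - ps h. Proof. by rewrite /ps rmorphB hornerD hornerN. Qed.
Let ev1 : ev 1 = 1. Proof. by rewrite /ev rmorph1 hornerC. Qed.
Let ps1 : ps 1 = 1. Proof. by rewrite /ps rmorph1 hornerC. Qed.
Let ev0 : ev 0 = 0. Proof. by rewrite /ev rmorph0 hornerC. Qed.
Let ps0 : ps 0 = 0. Proof. by rewrite /ps rmorph0 hornerC. Qed.

Let nz g : ev g != 0 -> ps g != 0.
Proof. by move=> H; apply/eqP => /Hzw /eqP; rewrite (negbTE H). Qed.

Definition grE (p : L * L) := exists g h, [/\ ev h != 0, p.1 = ev g / ev h & p.2 = ps g / ps h].

Lemma grE_fun a b b' : grE (a,b) -> grE (a,b') -> b = b'.
Proof.
move=> [g [h [Hh /= -> ->]]] [g' [h' [Hh' /= Ha ->]]].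
have Hh2 := nz Hh; have Hh2' := nz Hh'.
have : ev (g * h' - g' * h) = 0.
  by rewrite evB !evM; apply/eqP; rewrite subr_eq0 -eqr_div // Ha.
by move/Hzw; rewrite psB !psM => /eqP; rewrite subr_eq0 -eqr_div // => /eqP.
Qed.

Lemma grE_sub a b a' b' : grE (a,b) -> grE (a',b') -> grE (a - a', b - b').
Proof.
move=> [g [h [Hh /= -> ->]]] [g' [h' [Hh' /= -> ->]]].
have Hh2 := nz Hh; have Hh2' := nz Hh'.
exists (g * h' - g' * h), (h * h'); split => /=.
- by rewrite evM mulf_neq0.
- by rewrite evB !evM; field; apply/andP.
- by rewrite psB !psM; field; apply/andP.
Qed.

Lemma grE_mul a b a' b' : grE (a,b) -> grE (a',b') -> grE (a * a', b * b').
Proof.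
move=> [g [h [Hh /= -> ->]]] [g' [h' [Hh' /= -> ->]]].
have Hh2 := nz Hh; have Hh2' := nz Hh'.
exists (g * g'), (h * h'); split => /=.
- by rewrite evM mulf_neq0.
- by rewrite !evM; field; apply/andP.
- by rewrite !psM; field; apply/andP.
Qed.

Lemma grE_one : grE (1,1).
Proof. by exists 1, 1; rewrite ev1 ps1 divr1 oner_neq0. Qed.

Lemma grE_inv a b : grE (a,b) -> exists c, grE (a^-1, c).
Proof.
move=> [g [h [Hh /= -> _]]].
have [Hg|Hg] := eqVneq (ev g) 0.
  exists 0; exists 0, 1; split => /=; first by rewrite ev1 oner_neq0.
    by rewrite Hg mul0r invr0 ev0 mul0r.
  by rewrite ps0 mul0r.
by exists (ps h / ps g), h, g; split => //=; rewrite invf_div.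
Qed.

Definition extG : ggraph L := GG grE_fun grE_sub grE_mul grE_one grE_inv.

Lemma extG_sub p : gr G p -> gr extG p.
Proof.
case: p => a b Hab.
have Ha : gdom G a by exists b.
pose x : D := inC (Ha : sfD (domS G) a).
exists x%:P, 1; split => /=.
- by rewrite ev1 oner_neq0.
- by rewrite ev1 divr1 /ev map_polyC hornerC.
- by rewrite ps1 divr1 /ps map_polyC hornerC /=; symmetry; apply: (phiG_eq (x:=x)).
Qed.

Lemma extG_zw : gr extG (z, w).
Proof.
exists 'X, 1; split => /=.
- by rewrite ev1 oner_neq0.
- by rewrite ev1 divr1 /ev map_polyX hornerX.
- by rewrite ps1 divr1 /ps map_polyX hornerX.
Qed.
End Core.

Section MinPoly.
Variables (D L : fieldType) (io : {rmorphism D -> L}) (z : L).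

Lemma minpoly_ex : (exists g : {poly D}, g != 0 /\ root (map_poly io g) z) ->
  exists p : {poly D}, [/\ p != 0, root (map_poly io p) z &
     forall g, root (map_poly io g) z -> p %| g].
Proof.
move=> Hex.
have Hn : exists n, exists g : {poly D}, [/\ g != 0, root (map_poly io g) z & size g = n].
  by case: Hex => g [g0 rg]; exists (size g), g.
pose P n := `[< exists g : {poly D}, [/\ g != 0, root (map_poly io g) z & size g = n] >].
have HP : exists n, P n by case: Hn => n Hn; exists n; apply/asboolP.
case: (ex_minnP HP) => n /asboolP [p [p0 rp sp]] Hmin.
exists p; split => // g rg.
apply/modp_eq0P; apply/eqP; apply/negPn/negP => Hr.
have : P (size (g %% p)).
  apply/asboolP; exists (g %% p); split => //.
  rewrite map_modp; move: rg; rewrite /root.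
  have := divp_eq (map_poly io g) (map_poly io p).
  move=> {1}->; rewrite hornerD hornerM (eqP rp) mulr0 add0r => ->; by [].
move/Hmin; rewrite -sp leqNgt ltn_modp p0 //.
Qed.

Variables (p : {poly D}) (p0 : p != 0) (rp : root (map_poly io p) z)
  (pmin : forall g, root (map_poly io g) z -> p %| g).
Variables (phi : {rmorphism D -> L}) (w : L) (rw : root (map_poly phi p) w).

Lemma minpoly_transfer g : root (map_poly io g) z <-> root (map_poly phi g) w.
Proof.
split.
  move/pmin/dvdpP => [q ->]; by rewrite rmorphM rootM rw orbT.
move=> rg; apply/negPn/negP => ng.
have cop : coprimep p g.
  have dp := dvdp_gcdl p g; have dg := dvdp_gcdr p g.
  set d := gcdp p g in dp dg *.
  have d0 : d != 0 by rewrite gcdp_eq0 negb_and p0.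
  have := divpK dp; set e := p %/ d => pe.
  have e0 : e != 0 by apply: contraNneq p0 => e0; rewrite -pe e0 mul0r.
  have rp' : root (map_poly io (e * d)) z by rewrite pe.
  move: rp'; rewrite rmorphM rootM => /orP [re|rd].
    have pe' := pmin re.
    have H : ((size e + size d).-1 <= size e)%N.
      by rewrite -size_mul // pe; exact: dvdp_leq e0 pe'.
    have hd : (0 < size d)%N by rewrite size_poly_gt0.
    rewrite /coprimep -/d; apply/eqP.
    move: hd H; case: (size d) => [|[|m]] // _; case: (size e) => [|s]; rewrite ?add0n ?addSn /= => H; lia.
  have := dvdp_trans (pmin rd) dg.
  move/dvdpP => [q E]; move: ng; by rewrite E rmorphM rootM rp orbT.
case/Bezout_coprimepP: cop => [[u v]] /= /eqpf_eq [c c0 E].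
have := congr1 (fun q => (map_poly phi q).[w]) E.
rewrite !rmorphD !rmorphM /= hornerD !hornerM (eqP rw) (eqP rg) !mulr0 addr0.
rewrite linearZ /= rmorph1 hornerZ hornerC mulr1 => /esym/eqP.
by rewrite fmorph_eq0 (negbTE c0).
Qed.
End MinPoly.

Section Dir.
Variable L : fieldType.
Variable U : L * L -> Prop.
Hypothesis Hdir : forall p1 p2, U p1 -> U p2 ->
  exists G : ggraph L, [/\ forall p, gr G p -> U p, gr G p1 & gr G p2].
Hypothesis H1 : U (1,1).

Lemma dir_fun a b b' : U (a,b) -> U (a,b') -> b = b'.
Proof. by move=> H H'; case: (Hdir H H') => G [_ HG HG']; apply: gfun HG HG'. Qed.
Lemma dir_sub a b a' b' : U (a,b) -> U (a',b') -> U (a - a', b - b').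
Proof. by move=> H H'; case: (Hdir H H') => G [s HG HG']; apply/s/gsub. Qed.
Lemma dir_mul a b a' b' : U (a,b) -> U (a',b') -> U (a * a', b * b').
Proof. by move=> H H'; case: (Hdir H H') => G [s HG HG']; apply/s/gmul. Qed.
Lemma dir_inv a b : U (a,b) -> exists c, U (a^-1, c).
Proof.
move=> H; case: (Hdir H H) => G [s HG _]; case: (ginv HG) => c Hc.
by exists c; apply: s.
Qed.
Definition dirG : ggraph L := GG dir_fun dir_sub dir_mul H1 dir_inv.
End Dir.

Section Zorn.
Variables (k : fieldType) (L : closedFieldType) (iota : {rmorphism k -> L}).
Hypothesis L_alg : forall x : L, exists2 p : {poly k}, p != 0 & root (map_poly iota p) x.

Definition ifix (G : ggraph L) := forall a, gr G (iota a, iota a).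

Lemma ext_step (G : ggraph L) z : ifix G ->
  exists G' : ggraph L, (forall p, gr G p -> gr G' p) /\ gdom G' z.
Proof.
move=> HK.
have HKd a : sfD (domS G) (iota a) by exists (iota a).
case: (L_alg z) => P P0 rP.
pose g : {poly carrier (domS G)} := \poly_(i < size P) inC (HKd P`_i).
have Hg : map_poly val g = map_poly iota P.
  apply/polyP => i; rewrite !coef_map /= coef_poly.
  by case: ltnP => // H; rewrite nth_default // rmorph0.
have g0 : g != 0.
  by apply: contraNneq P0 => g0; move: Hg; rewrite g0 rmorph0 => /esym/eqP; rewrite map_poly_eq0.
have rg : root (map_poly val g) z by rewrite Hg.
have [p [p0 rp pmin]] := minpoly_ex (ex_intro _ g (conj g0 rg)).
have : size (map_poly (@phiG _ G) p) != 1%N.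
  rewrite size_map_poly; apply/eqP => sp1.
  move/eqP/size_poly1P: sp1 => [c c0 pc]; move: rp.
  by rewrite pc map_polyC rootC fmorph_eq0 (negbTE c0).
case/closed_rootP => w rw.
have Hzw := minpoly_transfer p0 rp pmin rw.
have Hzw' : forall g0 : {poly carrier (domS G)},
    (map_poly val g0).[z] = 0 <-> (map_poly (@phiG _ G) g0).[w] = 0.
  by move=> g1; have := Hzw g1; rewrite /root => -[A B]; split => /eqP H; apply/eqP; [apply: A|apply: B].
exists (extG Hzw'); split; first by move=> q; apply: extG_sub.
by exists w; apply: extG_zw.
Qed.

Lemma max_ext (G0 : ggraph L) : ifix G0 ->
  exists M : ggraph L, (forall p, gr G0 p -> gr M p) /\ (forall a, gdom M a).
Proof.
move=> HG0.
pose P (A : set (L * L)) := exists G : ggraph L, forall p, gr G p <-> (A p \/ gr G0 p).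
have HZ : forall F : set (set (L * L)), (F `<=` P)%classic -> total_on F subset ->
    P (\bigcup_(X in F) X)%classic.
  move=> F FP Ftot.
  pose U p := (\bigcup_(X in F) X)%classic p \/ gr G0 p.
  have HX : forall X, F X -> exists G : ggraph L,
      [/\ forall p, gr G p -> U p, forall p, X p -> gr G p & forall p, gr G0 p -> gr G p].
    move=> X FX; case: (FP X FX) => G HG; exists G; split.
    - by move=> p /HG [Xp|Gp]; [left; exists X|right].
    - by move=> p Xp; apply/HG; left.
    - by move=> p Gp; apply/HG; right.
  have Hdir : forall p1 p2, U p1 -> U p2 ->
      exists G : ggraph L, [/\ forall p, gr G p -> U p, gr G p1 & gr G p2].
    move=> p1 p2 [[X1 FX1 X1p]|G1] [[X2 FX2 X2p]|G2].
    - case: (Ftot X1 X2 FX1 FX2) => S.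
        by case: (HX X2 FX2) => G [s a b]; exists G; split => //; apply: a; [apply: S|].
      by case: (HX X1 FX1) => G [s a b]; exists G; split => //; apply: a; [|apply: S].
    - by case: (HX X1 FX1) => G [s a b]; exists G; split => //; [apply: a|apply: b].
    - by case: (HX X2 FX2) => G [s a b]; exists G; split => //; [apply: b|apply: a].
    - by exists G0; split => // p Gp; right.
  have H1 : U (1,1) by right; apply: gone.
  by exists (dirG Hdir H1).
case: (Zorn_bigcup HZ) => A [[M HM] Amax].
have G0M : forall p, gr G0 p -> gr M p by move=> p Gp; apply/HM; right.
exists M; split => // z; apply: contrapT => nz.
have [G' [MG' [w Hw]]] := ext_step z (fun a => G0M _ (HG0 a)).
apply: (Amax (gr G')).
  split; first by move=> p Ap; apply: MG'; apply/HM; left.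
  move=> /(_ _ Hw) Azw; apply: nz; exists w; apply/HM; left; exact: Azw.
rewrite /P; exists G' => p; split; first by left.
by case => // /G0M /MG'.
Qed.
End Zorn.

Section Sig.
Variable L : fieldType.
Definition sigM (M : ggraph L) (Ht : forall a, gdom M a) (a : L) : L := projT1 (cid (Ht a)).
Lemma sigMP M Ht a : gr M (a, @sigM M Ht a).
Proof. exact: projT2 (cid (Ht a)). Qed.
Lemma sigM_eq M Ht a b : gr M (a, b) -> @sigM M Ht a = b.
Proof. by move=> H; apply: gfun (sigMP _ _) H. Qed.
Lemma sigM_zmod M Ht : zmod_morphism (@sigM M Ht).
Proof. by move=> x y; apply: sigM_eq; apply: gsub; apply: sigMP. Qed.
Lemma sigM_monoid M Ht : monoid_morphism (@sigM M Ht).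
Proof.
split; first by apply: sigM_eq; apply: gone.
by move=> x y; apply: sigM_eq; apply: gmul; apply: sigMP.
Qed.
HB.instance Definition _ M Ht := GRing.isZmodMorphism.Build _ _ (@sigM M Ht) (@sigM_zmod M Ht).
HB.instance Definition _ M Ht := GRing.isMonoidMorphism.Build _ _ (@sigM M Ht) (@sigM_monoid M Ht).
End Sig.

Section Bij.
Variables (k : fieldType) (L : closedFieldType) (iota : {rmorphism k -> L}).
Hypothesis L_alg : forall x : L, exists2 p : {poly k}, p != 0 & root (map_poly iota p) x.

Lemma bij_of (s : {rmorphism L -> L}) : (forall a, s (iota a) = iota a) -> bijective s.
Proof.
move=> Hs.
have inj := fmorph_inj s.
have surj : forall y, exists x, s x = y.
  move=> y; case: (L_alg y) => P P0 rP.
  set q := map_poly iota P.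
  have q0 : q != 0 by rewrite map_poly_eq0.
  have Hq : map_poly s q = q.
    by rewrite -map_poly_comp; apply: eq_map_poly => a /=; rewrite Hs.
  case: (closed_field_poly_normal q) => rs Hrs.
  have rootq x : root q x = (x \in rs).
    rewrite Hrs rootZ ?lead_coef_eq0 //; exact: root_prod_XsubC.
  set u := undup rs.
  have sub : {subset map s u <= u}.
    move=> _ /mapP [x xu ->]; rewrite mem_undup -rootq -Hq.
    by rewrite /root horner_map; move: xu; rewrite mem_undup -rootq /root => /eqP ->; rewrite rmorph0.
  have [_ E] : ((size (map s u) = size u) * (map s u =i u))%type.
    apply: uniq_min_size; first by rewrite map_inj_uniq ?undup_uniq.
      exact: sub.
    by rewrite size_map.
  have : y \in u by rewrite mem_undup -rootq.
  by rewrite -E => /mapP [x _ ->]; exists x.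
pose g y := projT1 (cid (surj y)).
have gK : cancel g s by move=> y; rewrite /g; case: (cid (surj y)).
by exists g => // x; apply: inj; rewrite gK.
Qed.

Lemma auto_ext (G0 : ggraph L) : ifix iota G0 ->
  exists s : {rmorphism L -> L}, bijective s /\ (forall a b, gr G0 (a,b) -> s a = b).
Proof.
move=> HG0; case: (max_ext L_alg HG0) => M [G0M Ht].
exists (sigM Ht); split.
  by apply: bij_of => a; apply: sigM_eq; apply: G0M.
by move=> a b H; apply: sigM_eq; apply: G0M.
Qed.
End Bij.

Section Fixed.
Variables (k : fieldType) (L : closedFieldType) (iota : {rmorphism k -> L}).
Hypothesis L_alg : forall x : L, exists2 p : {poly k}, p != 0 & root (map_poly iota p) x.

Section GK.
Variables (K : L -> Prop) (HKs : is_subfield K).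
Let grK (p : L * L) := K p.1 /\ p.2 = p.1.
Lemma grK_fun a b b' : grK (a,b) -> grK (a,b') -> b = b'.
Proof. by move=> [_ /= ->] [_ /= ->]. Qed.
Lemma grK_sub a b a' b' : grK (a,b) -> grK (a',b') -> grK (a - a', b - b').
Proof. by case: HKs => _ HB _ _ [/= Ha ->] [/= Ha' ->]; split => //=; apply: HB. Qed.
Lemma grK_mul a b a' b' : grK (a,b) -> grK (a',b') -> grK (a * a', b * b').
Proof. by case: HKs => _ _ HM _ [/= Ha ->] [/= Ha' ->]; split => //=; apply: HM. Qed.
Lemma grK_one : grK (1,1).
Proof. by case: HKs. Qed.
Lemma grK_inv a b : grK (a,b) -> exists c, grK (a^-1, c).
Proof. by case: HKs => _ _ _ HV [/= Ha _]; exists a^-1; split => //=; apply: HV. Qed.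
Definition GK : ggraph L := GG grK_fun grK_sub grK_mul grK_one grK_inv.
Lemma GKP p : gr GK p <-> K p.1 /\ p.2 = p.1. Proof. by []. Qed.
End GK.

Lemma fixed_in (K : L -> Prop) : over_k iota K ->
  forall x (q : {poly L}), q != 0 -> (forall i, K q`_i) -> separable_poly q -> root q x ->
  (forall s : {rmorphism L -> L}, bijective s -> (forall y, K y -> s y = y) -> s x = x) ->
  K x.
Proof.
move=> [HKs Ki] x q q0 Kq sq rq Hfix; apply: contrapT => nKx.
have [K1 KB KM KV] := HKs.
pose G := GK HKs.
have HK a : K a -> sfD (domS G) a by move=> Ka; exists a.
have phiK (u : carrier (domS G)) : phiG u = val u.
  apply: phiG_eq; have [b [Hu _]] := carrierP u; by split.
have valK (u : carrier (domS G)) : K (val u) by have [b [Hu _]] := carrierP u.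
pose q' : {poly carrier (domS G)} := \poly_(i < size q) inC (HK _ (Kq i)).
have Hq : map_poly val q' = q.
  apply/polyP => i; rewrite coef_map /= coef_poly.
  by case: ltnP => // H; rewrite nth_default.
have q'0 : q' != 0.
  by apply: contraNneq q0 => e; rewrite -Hq e rmorph0.
have rq' : root (map_poly val q') x by rewrite Hq.
have [p [p0 rp pmin]] := minpoly_ex (ex_intro _ q' (conj q'0 rq')).
have sp : separable_poly (map_poly val p).
  rewrite separable_map; apply: (dvdp_separable (pmin _ rq')).
  by rewrite -(separable_map val) Hq.
set r := map_poly val p in rp sp.
have r0 : r != 0 by rewrite map_poly_eq0.
have Kr i : K r`_i by rewrite /r coef_map; apply: valK.
have K0 : K 0 by rewrite -(subrr 1); apply: KB.
case/factor_theorem: (rp) => r1 Hr.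
have r10 : r1 != 0 by apply: contraNneq r0 => e; rewrite Hr e mul0r.
have sr : size r = (size r1).+1.
  by rewrite Hr size_mul ?size_XsubC ?polyXsubC_eq0 // addn2.
have s1 : (0 < size r1)%N by rewrite size_poly_gt0.
have [e1|n1] := eqVneq (size r1) 1%N.
  move/eqP/size_poly1P: e1 => [c c0 Hc].
  have E0 : r`_0 = - (c * x) by rewrite Hr Hc coefCM coefB coefX coefC /=; ring.
  have E1 : r`_1 = c by rewrite Hr Hc coefCM coefB coefX coefC /=; ring.
  apply: nKx; have -> : x = (0 - r`_0) * (r`_1)^-1.
    by rewrite E0 E1 sub0r opprK mulrAC divff // mul1r.
  by apply: KM; [apply: KB|apply: KV].
case/closed_rootP: n1 => y ry.
have yx : y != x.
  apply/eqP => yx; move: ry; rewrite yx => /factor_theorem [r2 Hr2].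
  have := separable_coprime sp (u := 'X - x%:P) (v := 'X - x%:P).
  rewrite Hr Hr2 -mulrA dvdp_mull // => /(_ isT).
  by rewrite coprimepp size_XsubC.
have rw : root (map_poly (@phiG _ G) p) y.
  have -> : map_poly (@phiG _ G) p = r by apply: eq_map_poly => u; rewrite phiK.
  by rewrite Hr rootM ry.
have Hzw := minpoly_transfer p0 rp pmin rw.
have Hzw' : forall g0 : {poly carrier (domS G)},
    (map_poly val g0).[x] = 0 <-> (map_poly (@phiG _ G) g0).[y] = 0.
  by move=> g1; have := Hzw g1; rewrite /root => -[A B]; split => /eqP H; apply/eqP; [apply: A|apply: B].
pose G' := extG Hzw'.
have GG' p1 : gr G p1 -> gr G' p1 by apply: extG_sub.
have ifx : ifix iota G' by move=> a; apply: GG'; apply/GKP; split => //=; apply: Ki.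
have [s [bs Hs]] := auto_ext L_alg ifx.
have sx : s x = y by apply: Hs; apply: extG_zw.
have := Hfix s bs; rewrite sx => H.
suff : y = x by move/eqP; rewrite (negbTE yx).
apply: H.
by move=> a Ka; apply: Hs; apply: GG'; apply/GKP.
Qed.
End Fixed.

Section Roots.
Variable L : fieldType.
Variables (fL : {poly L}) (rs : seq L).
Hypothesis Hrs : fL = lead_coef fL *: \prod_(z <- rs) ('X - z%:P).
Hypothesis fL0 : fL != 0.
Hypothesis urs : uniq rs.

Lemma root_rs w : root fL w = (w \in rs).
Proof. by rewrite Hrs rootZ ?lead_coef_eq0 // root_prod_XsubC. Qed.

Lemma dvd_rs g : fL %| g <-> (forall w, w \in rs -> g.[w] = 0).
Proof.
split.
  move=> /dvdpP [q ->] w wr; rewrite hornerM.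
  by move: wr; rewrite -root_rs => /eqP ->; rewrite mulr0.
move=> H.
have : \prod_(z <- rs) ('X - z%:P) %| g.
  apply: uniq_roots_dvdp; last by rewrite uniq_rootsE.
  by apply/allP => w /H /eqP.
by rewrite Hrs (eqp_dvdl _ (eqp_scale _ _)) // lead_coef_eq0.
Qed.

Lemma mod_rs e w : w \in rs -> (e %% fL).[w] = e.[w].
Proof.
move=> wr; rewrite {2}(divp_eq e fL) hornerD hornerM.
by move: wr; rewrite -root_rs => /eqP ->; rewrite mulr0 add0r.
Qed.
End Roots.

Section Interp.
Variable L : fieldType.
Lemma interp (rs : seq L) (v : L -> L) : uniq rs ->
  exists e : {poly L}, forall w, w \in rs -> e.[w] = v w.
Proof.
elim: rs => [|a rs IH] /=; first by exists 0.
case/andP => nar urs; case: (IH urs) => e He.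
pose P := \prod_(z <- rs) ('X - z%:P).
have Pa : P.[a] != 0 by rewrite -/(root P a) root_prod_XsubC.
exists (e + ((v a - e.[a]) / P.[a]) *: P) => w; rewrite inE => /orP [/eqP ->|wr].
  by rewrite hornerD hornerZ divfK // addrC subrK.
have : root P w by rewrite root_prod_XsubC.
by rewrite hornerD hornerZ He // => /eqP ->; rewrite mulr0 addr0.
Qed.
End Interp.

Section Line.
Variable L : closedFieldType.
Variables (s : {rmorphism L -> L}) (fL eps : {poly L}) (c : L).
Hypotheses (bs : bijective s) (c2 : c ^+ 2 = 1) (sf : map_poly s fL = fL)
  (se : fL %| map_poly s eps - c *: eps).

Let c0 : c != 0.
Proof. by apply: contra_eq_neq c2 => ->; rewrite expr0n /= eq_sym oner_neq0. Qed.

Let dmap h : (fL %| map_poly s h) = (fL %| h).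
Proof. by rewrite -{1}sf dvdp_map. Qed.

Lemma line_fix : fixes_line s (line_of fL eps).
Proof.
move=> q; split.
  move=> [Hs [a [b Hd]]]; split; first by rewrite size_map_poly.
  exists (c * s a), (c * s b).
  rewrite -dmap rmorphB rmorphM /= rmorphD /= map_polyZ map_polyX map_polyC /= in Hd.
  set A := map_poly s eps * map_poly s q - (s a *: 'X + (s b)%:P) in Hd.
  have E : eps * map_poly s q - ((c * s a) *: 'X + (c * s b)%:P) =
     c *: A - c *: ((map_poly s eps - c *: eps) * map_poly s q).
    apply/eqP; rewrite -subr_eq0; apply/eqP.
    transitivity (((1 - c ^+ 2)%:P) * (eps * map_poly s q)); last by rewrite c2 subrr mul0r.
    rewrite /A -!mul_polyC !polyCM polyCB rmorphXn /= polyC1; ring.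
  by rewrite E dvdp_sub // dvdpZr // dvdp_mulr.
move=> [Hs [a [b Hd]]]; split; first by rewrite size_map_poly in Hs.
case: bs => g sg gs.
exists (g (c * a)), (g (c * b)).
rewrite -dmap rmorphB rmorphM /= rmorphD /= map_polyZ map_polyX map_polyC /= !gs.
have E : map_poly s eps * map_poly s q - ((c * a) *: 'X + (c * b)%:P) =
   (map_poly s eps - c *: eps) * map_poly s q + c *: (eps * map_poly s q - (a *: 'X + b%:P)).
  rewrite -!mul_polyC !polyCM; ring.
by rewrite E dvdp_add // ?dvdp_mulr // dvdpZr.
Qed.
End Line.

Lemma three_sq (L : fieldType) (a b w1 w2 w3 : L) : w1 != w2 -> w1 != w3 -> w2 != w3 ->
  (a * w1 + b) ^+ 2 = 1 -> (a * w2 + b) ^+ 2 = 1 -> (a * w3 + b) ^+ 2 = 1 -> a = 0.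
Proof.
move=> n12 n13 n23 /eqP; rewrite sqrf_eq1 => H1 /eqP; rewrite sqrf_eq1 => H2 /eqP; rewrite sqrf_eq1 => H3.
have key x y : x != y -> a * x + b = a * y + b -> a = 0.
  move=> nxy /eqP; rewrite (can_eq (addrK b)) => /eqP E.
  have : a * (x - y) = 0 by rewrite mulrBr E subrr.
  by move/eqP; rewrite mulf_eq0 subr_eq0 (negbTE nxy) orbF => /eqP.
move: H1 H2 H3 => /orP [/eqP A1|/eqP A1] /orP [/eqP A2|/eqP A2] /orP [/eqP A3|/eqP A3].
all: first [ apply: (key _ _ n12); by rewrite A1 A2
           | apply: (key _ _ n13); by rewrite A1 A3
           | apply: (key _ _ n23); by rewrite A2 A3 ].
Qed.

Section LineInv.
Variable L : closedFieldType.
Variables (s : {rmorphism L -> L}) (fL eps dL : {poly L}) (rs : seq L).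
Hypotheses (Hrs : fL = lead_coef fL *: \prod_(z <- rs) ('X - z%:P)) (fL0 : fL != 0)
  (urs : uniq rs) (s3 : (3 <= size rs)%N).
Hypotheses (sf : map_poly s fL = fL) (sd : map_poly s dL = dL)
  (he : fL %| eps * eps - dL) (nz : forall w, w \in rs -> eps.[w] != 0)
  (fx : fixes_line s (line_of fL eps)).

Let dmap h : (fL %| map_poly s h) = (fL %| h).
Proof. by rewrite -{1}sf dvdp_map. Qed.

Lemma line_fix_inv : exists c, c ^+ 2 = 1 /\ fL %| map_poly s eps - c *: eps.
Proof.
have [e He] := interp (fun w => (eps.[w])^-1) urs.
pose q0 := e %% fL.
have q0w w : w \in rs -> q0.[w] = (eps.[w])^-1 by move=> wr; rewrite /q0 (mod_rs Hrs) // He.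
have d1 : fL %| eps * q0 - 1.
  apply/(dvd_rs Hrs fL0 urs) => w wr.
  by rewrite hornerD hornerN hornerM q0w // divff ?nz // hornerC subrr.
have Hq0 : line_of fL eps q0.
  split; first by rewrite ltn_modp.
  by exists 0, 1; rewrite scale0r add0r polyC1.
have [_ [a1 [b1 Hd]]] := proj1 (fx q0) Hq0.
have d2 : fL %| map_poly s eps * map_poly s q0 - 1.
  by rewrite -dmap rmorphB rmorphM rmorph1 in d1.
have d3 : fL %| map_poly s eps * map_poly s eps - dL.
  by have := he; rewrite -dmap rmorphB rmorphM /= sd.
move/(dvd_rs Hrs fL0 urs): Hd => Hd.
move/(dvd_rs Hrs fL0 urs): d2 => d2.
move/(dvd_rs Hrs fL0 urs): d3 => d3.
have := he; move/(dvd_rs Hrs fL0 urs) => d4.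
have H1 w : w \in rs -> eps.[w] * (map_poly s q0).[w] = a1 * w + b1.
  move=> wr; have := Hd w wr; rewrite hornerD hornerN hornerM hornerD hornerZ hornerX hornerC.
  by move/eqP; rewrite subr_eq0 => /eqP.
have H2 w : w \in rs -> (map_poly s eps).[w] * (map_poly s q0).[w] = 1.
  move=> wr; have := d2 w wr; rewrite hornerD hornerN hornerM hornerC.
  by move/eqP; rewrite subr_eq0 => /eqP.
have H3 w : w \in rs -> (map_poly s eps).[w] ^+ 2 = eps.[w] ^+ 2.
  move=> wr; move: (d3 w wr) (d4 w wr); rewrite !hornerD !hornerN !hornerM !expr2.
  by move=> /eqP; rewrite subr_eq0 => /eqP -> /eqP; rewrite subr_eq0 => /eqP ->.
have H4 w : w \in rs -> (a1 * w + b1) ^+ 2 = 1.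
  by move=> wr; rewrite -H1 // exprMn -H3 // -exprMn H2 // expr1n.
have a10 : a1 = 0.
  have h0 : (0 < size rs)%N by apply: leq_trans s3.
  have h1 : (1 < size rs)%N by apply: leq_trans s3.
  have h2 : (2 < size rs)%N by [].
  have n01 : nth 0 rs 0 != nth 0 rs 1 by rewrite nth_uniq.
  have n02 : nth 0 rs 0 != nth 0 rs 2 by rewrite nth_uniq.
  have n12 : nth 0 rs 1 != nth 0 rs 2 by rewrite nth_uniq.
  by apply: (three_sq n01 n02 n12); apply: H4; apply: mem_nth.
have b2 : b1 ^+ 2 = 1.
  have := H4 (nth 0 rs 0) (mem_nth _ (leq_trans _ s3)).
  by rewrite a10 mul0r add0r => ->.
exists b1; split => //.
apply/(dvd_rs Hrs fL0 urs) => w wr.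
have u0 : (map_poly s q0).[w] != 0.
  by apply/eqP => u0; move: (H2 w wr); rewrite u0 mulr0 => /eqP; rewrite eq_sym oner_eq0.
apply/eqP; rewrite -(mulIr_eq0 _ (mulIf u0)) hornerD hornerN hornerZ mulrBl H2 //.
by rewrite -mulrA H1 // a10 mul0r add0r -expr2 b2 subrr.
Qed.
End LineInv.

Lemma Khorner (L : closedFieldType) (K : L -> Prop) : is_subfield K ->
  forall (p : {poly L}) x, (forall i, K p`_i) -> K x -> K p.[x].
Proof.
case=> K1 KB KM KV p x Kp Kx.
have K0 : K 0 by rewrite -(subrr 1); apply: (KB).
have KD a b : K a -> K b -> K (a + b).
  move=> Ka Kb; have -> : a + b = a - (0 - b) by rewrite sub0r opprK.
  by apply: (KB) => //; apply: (KB).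
elim/poly_ind: p Kp => [|p c IH] Kp; first by rewrite horner0.
rewrite hornerMXaddC; apply: KD; last first.
  by have := Kp 0%N; rewrite coefD coefMX coefC /= add0r.
apply: KM => //; apply: IH => i.
by have := Kp i.+1; rewrite coefD coefMX coefC /= addr0.
Qed.

Lemma avoid2 (L : eqType) (g : L -> L) (a0 a1 a2 u : L) : injective g ->
  a0 != a1 -> a0 != a2 -> a1 != a2 ->
  exists2 i, i \in [:: a0; a1; a2] & (i != u) && (g i != u).
Proof.
move=> ig n01 n02 n12.
have [e0|e0] := eqVneq a0 u; last have [f0|f0] := eqVneq (g a0) u.
- have [f1|f1] := eqVneq (g a1) u.
    have [f2|f2] := eqVneq (g a2) u.
      by move: n12; rewrite (ig a1 a2) ?eqxx // f1 f2.
    by exists a2; rewrite ?inE ?eqxx ?orbT // f2 -e0 eq_sym n02.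
  by exists a1; rewrite ?inE ?eqxx ?orbT // f1 -e0 eq_sym n01.
- have [e1|e1] := eqVneq a1 u.
    have [e2|e2] := eqVneq a2 u; first by move: n12; rewrite e1 e2 eqxx.
    have [f2|f2] := eqVneq (g a2) u.
      by move: n02; rewrite (ig a0 a2) ?eqxx // f0 f2.
    by exists a2; rewrite ?inE ?eqxx ?orbT // f2 e2.
  have [f1|f1] := eqVneq (g a1) u; last by exists a1; rewrite ?inE ?eqxx ?orbT // f1 e1.
  by move: n01; rewrite (ig a0 a1) ?eqxx // f0 f1.
- by exists a0; rewrite ?inE ?eqxx // e0 f0.
Qed.

Unset Implicit Arguments.
Theorem lemma2p36 (k : fieldType) (L : closedFieldType)
  (iota : {rmorphism k -> L})
  (L_alg : forall x : L, exists2 p : {poly k}, p != 0 & root (map_poly iota p) x)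
  (char_k : ~~ (2%N \in [pchar k]))
  (f : {poly k}) (f_sep : separable_poly f) (f_deg : size f = 7%N)
  (delta : {poly k}) (delta_unit : coprimep delta f)
  (sq : L -> L)
  (sq_spec : forall w, root (map_poly iota f) w ->
                 sq w ^+ 2 = (map_poly iota delta).[w]) :
  let m := gen_field iota (fun x => root (map_poly iota f) x \/
             exists w psi, [/\ root (map_poly iota f) w, root (map_poly iota f) psi
                             & x = sq w * sq psi]) in
  lines_fixed_over iota f delta m /\
  (forall K, over_k iota K -> lines_fixed_over iota f delta K -> forall x, m x -> K x).
Proof.
move=> m.
rewrite /lines_fixed_over.
set fL := map_poly iota f in sq_spec m *.
set dL := map_poly iota delta in sq_spec m *.
have f0 : f != 0 by rewrite -size_poly_eq0 f_deg.
have fL0 : fL != 0 by rewrite map_poly_eq0.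
have sfL : size fL = 7%N by rewrite size_map_poly.
case: (closed_field_poly_normal fL) => rs Hrs.
have sepL : separable_poly fL by rewrite separable_map.
have lc0 : lead_coef fL != 0 by rewrite lead_coef_eq0.
have urs : uniq rs.
  by move: sepL; rewrite {1}Hrs (eqp_separable (eqp_scale _ lc0)) separable_prod_XsubC.
have srs : size rs = 6%N.
  by move: sfL; rewrite {1}Hrs size_scale // size_prod_XsubC => -[].
have s3 : (3 <= size rs)%N by rewrite srs.
have rootE w : root fL w = (w \in rs) := root_rs Hrs fL0 w.
have cop : coprimep fL dL by rewrite coprimep_sym coprimep_map.
have dnz w : w \in rs -> dL.[w] != 0.
  by move=> wr; apply: (coprimep_root cop); rewrite rootE.
have sqs w : w \in rs -> sq w ^+ 2 = dL.[w] by move=> wr; apply: sq_spec; rewrite rootE.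
have sqnz w : w \in rs -> sq w != 0.
  by move=> wr; apply: contraNneq (dnz w wr) => e; rewrite -sqs // e expr0n.
have two : (2 : L) != 0.
  have : (2%:R : k) != 0 by move: char_k; rewrite inE /=.
  by apply: contraNneq => e; rewrite -(fmorph_eq0 iota) rmorph_nat e.
have m_iota a : m (iota a) by move=> K [_ Ki] _; apply: Ki.
have m_root w : w \in rs -> m w by move=> wr K _ HS; apply: HS; left; rewrite rootE.
have m_prod w ps : w \in rs -> ps \in rs -> m (sq w * sq ps).
  by move=> wr pr K _ HS; apply: HS; right; exists w, ps; split; rewrite ?rootE.
have Heps eps : fL %| eps * eps - dL -> forall w, w \in rs -> eps.[w] ^+ 2 = dL.[w].
  move/(dvd_rs Hrs fL0 urs) => H w wr; have := H w wr.
  by rewrite hornerD hornerN hornerM => /eqP; rewrite subr_eq0 expr2 => /eqP.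
have w0r : nth 0 rs 0 \in rs by apply: mem_nth; rewrite srs.
split.
  move=> s bs Hfix eps He.
  have sf : map_poly s fL = fL.
    by rewrite /fL -map_poly_comp; apply: eq_map_poly => a /=; apply: Hfix; apply: m_iota.
  set w0 := nth 0 rs 0 in w0r.
  set e0 := eps.[w0].
  have e0nz : e0 != 0.
    by apply: contraNneq (dnz w0 w0r) => e; rewrite -(Heps eps He) // -/e0 e expr0n.
  have Hx w : w \in rs -> s (eps.[w] * e0) = eps.[w] * e0.
    move=> wr.
    have : (eps.[w] * e0) ^+ 2 == (sq w * sq w0) ^+ 2.
      by rewrite !exprMn (Heps eps He) // (Heps eps He) // !sqs.
    rewrite eqf_sqr => /orP [/eqP ->|/eqP ->]; first by apply: Hfix; apply: m_prod.
    by rewrite rmorphN /= Hfix //; apply: m_prod.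
  have se0 : s e0 * s e0 = e0 * e0 by rewrite -rmorphM Hx.
  have se0nz : s e0 != 0 by rewrite fmorph_eq0.
  pose c := s e0 / e0.
  have c2 : c ^+ 2 = 1 by rewrite /c expr_div_n !expr2 se0 divff // mulf_neq0.
  apply: (line_fix bs c2 sf).
  apply/(dvd_rs Hrs fL0 urs) => w wr.
  rewrite hornerD hornerN hornerZ -{1}(Hfix w (m_root w wr)) horner_map.
  apply/eqP; rewrite subr_eq0; apply/eqP; apply: (mulIf se0nz).
  rewrite -rmorphM Hx // /c.
  rewrite (_ : s e0 / e0 * eps.[w] * s e0 = (s e0 * s e0) / e0 * eps.[w]); last by field.
  by rewrite se0; field.
move=> K HK Hl x mx; apply: mx => //.
have [HKs Ki] := HK.
have [K1 KB KM KV] := HKs.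
have Hsig (s : {rmorphism L -> L}) : bijective s -> (forall y, K y -> s y = y) ->
    forall eps, fL %| eps * eps - dL ->
    exists c, c ^+ 2 = 1 /\ forall w, w \in rs -> s (eps.[w]) = c * eps.[s w].
  move=> bs Hs eps He.
  have sf : map_poly s fL = fL.
    by rewrite /fL -map_poly_comp; apply: eq_map_poly => a /=; apply: Hs; apply: Ki.
  have sd : map_poly s dL = dL.
    by rewrite /dL -map_poly_comp; apply: eq_map_poly => a /=; apply: Hs; apply: Ki.
  have nz w : w \in rs -> eps.[w] != 0.
    by move=> wr; apply: contraNneq (dnz w wr) => e; rewrite -(Heps eps He) // e expr0n.
  have [c [c2 Hc]] := line_fix_inv Hrs fL0 urs s3 sf sd He nz (Hl s bs Hs eps He).
  exists c; split => // w wr.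
  have swr : s w \in rs.
    by rewrite -rootE /root -sf horner_map; move: wr; rewrite -rootE => /eqP ->; rewrite rmorph0.
  move/(dvd_rs Hrs fL0 urs): Hc => /(_ _ swr).
  by rewrite hornerD hornerN hornerZ horner_map => /eqP; rewrite subr_eq0 => /eqP.
have [eps1 He1] := interp sq urs.
have flip u : exists eps, fL %| eps * eps - dL /\
    forall w, w \in rs -> eps.[w] = if w == u then - sq w else sq w.
  have [e He] := interp (fun w => if w == u then - sq w else sq w) urs.
  exists e; split => //; apply/(dvd_rs Hrs fL0 urs) => w wr.
  by rewrite hornerD hornerN hornerM He // -expr2; case: ifP => _; rewrite ?sqrrN sqs // subrr.
have dv1 : fL %| eps1 * eps1 - dL.
  apply/(dvd_rs Hrs fL0 urs) => w wr.
  by rewrite hornerD hornerN hornerM He1 // -expr2 sqs // subrr.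
have smap (s : {rmorphism L -> L}) : (forall y, K y -> s y = y) -> forall w, w \in rs -> s w \in rs.
  move=> Hs w wr.
  have sf : map_poly s fL = fL.
    by rewrite /fL -map_poly_comp; apply: eq_map_poly => a /=; apply: Hs; apply: Ki.
  by rewrite -rootE /root -sf horner_map; move: wr; rewrite -rootE => /eqP ->; rewrite rmorph0.
have in3 i : (i < 3)%N -> nth 0 rs i \in rs by move=> hi; apply: mem_nth; rewrite srs; lia.
have n01 : nth 0 rs 0 != nth 0 rs 1 by rewrite nth_uniq ?srs.
have n02 : nth 0 rs 0 != nth 0 rs 2 by rewrite nth_uniq ?srs.
have n12 : nth 0 rs 1 != nth 0 rs 2 by rewrite nth_uniq ?srs.
have fixroots (s : {rmorphism L -> L}) : bijective s -> (forall y, K y -> s y = y) ->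
    forall w, w \in rs -> s w = w.
  move=> bs Hs u ur; apply: contrapT => nu.
  have [c1 [c12 H1]] := Hsig s bs Hs eps1 dv1.
  have [e2 [dv2 He2]] := flip u.
  have [c2 [c22 H2]] := Hsig s bs Hs e2 dv2.
  have sur := smap s Hs u ur.
  have cc : c2 = - c1.
    have := H2 u ur; rewrite He2 // eqxx He2 // (negbTE (introN eqP nu)) rmorphN /=.
    rewrite -(He1 u ur) H1 // He1 // => /eqP; rewrite -mulNr (can_eq (mulfK (sqnz _ sur))) => /eqP.
    by move=> ->.
  have [i iin /andP [iu siu]] := @avoid2 L s _ _ _ u (fmorph_inj s) n01 n02 n12.
  have ir : i \in rs by move: iin; rewrite !inE => /or3P [] /eqP ->; apply: in3.
  have sir := smap s Hs i ir.
  have := H2 i ir; rewrite He2 // (negbTE iu) He2 // (negbTE siu) -(He1 i ir) H1 // He1 //.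
  move=> /eqP; rewrite (can_eq (mulfK (sqnz _ sir))) cc => /eqP E.
  have : c1 * 2 = 0 by rewrite mulrDr mulr1 {1}E addNr.
  move/eqP; rewrite mulf_eq0 (negbTE two) orbF => /eqP c10.
  by move: c12; rewrite c10 expr0n /= => /eqP; rewrite eq_sym oner_eq0.
have rootsK w : w \in rs -> K w.
  move=> wr.
  apply: (@fixed_in k L iota L_alg K HK w fL fL0) => //.
  - by move=> i; rewrite /fL coef_map; apply: Ki.
  - by rewrite rootE.
  - by move=> s bs Hs; apply: fixroots.
have K0 : K 0 by rewrite -(subrr 1); apply: (KB).
have prodK w ps : w \in rs -> ps \in rs -> K (sq w * sq ps).
  move=> wr pr; set r := sq w * sq ps.
  have r0 : r != 0 by rewrite mulf_neq0 // sqnz.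
  have rr : r != - r.
    apply/eqP => E; have : r * 2 = 0 by rewrite mulrDr mulr1 {1}E addNr.
    by move/eqP; rewrite mulf_eq0 (negbTE two) (negbTE r0).
  pose q := \prod_(z <- [:: r; - r]) ('X - z%:P).
  have Kr2 : K (r ^+ 2).
    rewrite exprMn !sqs //; apply: (KM); apply: Khorner => //; try (by apply: rootsK);
      by move=> i; rewrite /dL coef_map; apply: Ki.
  apply: (@fixed_in k L iota L_alg K HK r q).
  - by rewrite /q monic_neq0 // monic_prod_XsubC.
  - move=> i.
    have -> : q = 'X^2 - (r ^+ 2)%:P.
      by rewrite /q big_cons big_seq1 polyCN rmorphXn /=; ring.
    rewrite coefB coefXn coefC.
    case: (i == 2)%N; case: (i == 0)%N => /=; try apply: (KB) => //.
  - by rewrite /q separable_prod_XsubC /= inE andbT.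
  - by rewrite /q root_prod_XsubC inE eqxx.
  - move=> s bs Hs.
    have [c1 [c12 H1]] := Hsig s bs Hs eps1 dv1.
    rewrite /r rmorphM /= -(He1 w wr) -(He1 ps pr) !H1 // !fixroots //.
    by rewrite mulrACA -expr2 c12 mul1r.
by move=> y [ry|[w [ps [rw rps ->]]]]; [apply: rootsK; rewrite -rootE | apply: prodK; rewrite -rootE].

Qed.
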